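(* Let $F_\infty$ be the free group on a countably infinite set. Then neither $\mathrm{Aut}(F_\infty)$ nor $\mathrm{Out}(F_\infty)$ is residually finite, and neither satisfies the Tits alternative.
   Context: A group is residually finite if for every nontrivial element there is a homomorphism to a finite group not killing it. A group satisfies the Tits alternative if every subgroup either is virtually solvable or contains a nonabelian free subgroup. *)

(* Defs.v *)
From mathcomp Require Import all_boot all_fingroup.
From Stdlib Require List.

Set Implicit Arguments.
Unset Strict Implicit.
Unset Printing Implicit Defensive.

(* Abstract (possibly infinite) groups, presented set-theoretically:        *)
(* a carrier type [gT], the subset [gD] of elements that belong to the       *)
(* group, an equality [geq] on those elements (the group elements are the    *)
(* [geq]-classes of [gD]), and the group operations.                         *)
Record GroupData := {
  gT : Type;
  gD : gT -> Prop;
  geq : gT -> gT -> Prop;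
  gmul : gT -> gT -> gT;
  ginv : gT -> gT;
  gone : gT }.

Section GenericNotions.
Variable G : GroupData.
Local Notation T := (gT G).
Local Notation D := (@gD G).
Local Notation eqG := (@geq G).
Local Notation mul := (@gmul G).
Local Notation inv := (@ginv G).
Local Notation one := (@gone G).

Definition subgroup (S : T -> Prop) : Prop :=
  (forall x, S x -> D x) /\ S one /\
  (forall x y, S x -> S y -> S (mul x y)) /\
  (forall x, S x -> S (inv x)) /\
  (forall x y, S x -> D y -> eqG x y -> S y).

Definition hom_to_fin (H : finGroupType) (f : T -> H) : Prop :=
  (forall x y, D x -> D y -> eqG x y -> f x = f y) /\
  (forall x y, D x -> D y -> f (mul x y) = (f x * f y)%g).

Definition residually_finite : Prop :=
  forall g, D g -> ~ eqG g one ->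
    exists (H : finGroupType) (f : T -> H), hom_to_fin f /\ f g <> 1%g.

Inductive gen (A : T -> Prop) : T -> Prop :=
  | gen_base x : A x -> D x -> gen A x
  | gen_one : gen A one
  | gen_mul x y : gen A x -> gen A y -> gen A (mul x y)
  | gen_inv x : gen A x -> gen A (inv x)
  | gen_eq x y : gen A x -> D y -> eqG x y -> gen A y.

Definition comm (a b : T) : T := mul (mul (inv a) (inv b)) (mul a b).

Definition derived (S : T -> Prop) : T -> Prop :=
  gen (fun x => exists a b, S a /\ S b /\ x = comm a b).

Fixpoint derived_iter (n : nat) (S : T -> Prop) : T -> Prop :=
  match n with
  | 0 => S
  | n'.+1 => derived (derived_iter n' S)
  end.

Definition solvable_sub (S : T -> Prop) : Prop :=
  exists n, forall x, derived_iter n S x -> eqG x one.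

Definition finite_index (T0 S : T -> Prop) : Prop :=
  exists l : list T, (forall r, List.In r l -> S r) /\
    forall s, S s -> exists r t, List.In r l /\ T0 t /\ eqG s (mul r t).

Definition virtually_solvable (S : T -> Prop) : Prop :=
  exists T0, subgroup T0 /\ (forall x, T0 x -> S x) /\
    finite_index T0 S /\ solvable_sub T0.

(* words over an alphabet X; (x, false) stands for x, (x, true) for x^-1 *)
Inductive reduced_word {X : Type} : list (X * bool) -> Prop :=
  | rw_nil : reduced_word nil
  | rw_one a : reduced_word (a :: nil)
  | rw_cons a b w : ~ (a.1 = b.1 /\ a.2 <> b.2) ->
      reduced_word (b :: w) -> reduced_word (a :: b :: w).

Definition eval_word {X : Type} (f : X -> T) (w : list (X * bool)) : T :=
  foldr (fun a acc => mul (if a.2 then inv (f a.1) else f a.1) acc) one w.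

Definition contains_nonabelian_free (S : T -> Prop) : Prop :=
  exists (X : Type) (f : X -> T),
    (exists x y : X, x <> y) /\ (forall x, S (f x)) /\
    forall w, reduced_word w -> w <> nil -> ~ eqG (eval_word f w) one.

Definition tits_alternative : Prop :=
  forall S, subgroup S -> virtually_solvable S \/ contains_nonabelian_free S.

End GenericNotions.

(* The free group F_oo on the countably infinite set nat: words over nat,   *)
(* modulo free reduction.                                                    *)
Definition word := seq (nat * bool).

Definition push (a : nat * bool) (w : word) : word :=
  match w with
  | b :: w' => if (a.1 == b.1) && (a.2 != b.2) then w' else a :: w
  | [::] => [:: a]
  end.

Definition reduce (w : word) : word := foldr push [::] w.

Definition weq (u v : word) : Prop := reduce u = reduce v.

Definition winv (w : word) : word := rev (map (fun a => (a.1, ~~ a.2)) w).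

Definition is_Fhom (phi : word -> word) : Prop :=
  (forall u v, weq u v -> weq (phi u) (phi v)) /\
  (forall u v, weq (phi (u ++ v)) (phi u ++ phi v)).

(* Aut(F_oo): an automorphism is given by a pair (phi, psi) of mutually
   inverse endomorphisms; two pairs are equal iff phi agrees. *)
Definition aut_carrier := ((word -> word) * (word -> word))%type.

Definition is_aut (p : aut_carrier) : Prop :=
  is_Fhom p.1 /\ is_Fhom p.2 /\
  (forall w, weq (p.1 (p.2 w)) w) /\ (forall w, weq (p.2 (p.1 w)) w).

Definition aut_eq (p q : aut_carrier) : Prop := forall w, weq (p.1 w) (q.1 w).
Definition aut_mul (p q : aut_carrier) : aut_carrier :=
  (fun w => p.1 (q.1 w), fun w => q.2 (p.2 w)).
Definition aut_inv (p : aut_carrier) : aut_carrier := (p.2, p.1).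
Definition aut_one : aut_carrier := (fun w => w, fun w => w).

(* Out(F_oo) = Aut(F_oo)/Inn(F_oo): p ~ q iff p = (conj by c) o q *)
Definition out_eq (p q : aut_carrier) : Prop :=
  exists c : word, forall w, weq (p.1 w) (winv c ++ q.1 w ++ c).

Definition AutFinf : GroupData :=
  {| gT := aut_carrier; gD := is_aut; geq := aut_eq;
     gmul := aut_mul; ginv := aut_inv; gone := aut_one |}.

Definition OutFinf : GroupData :=
  {| gT := aut_carrier; gD := is_aut; geq := out_eq;
     gmul := aut_mul; ginv := aut_inv; gone := aut_one |}.

(* Main.v *)
Require Import Defs.
From Stdlib Require Import ZArith Lia Classical.
From mathcomp Require Import all_boot all_fingroup cyclic.
From mathcomp Require Import zify.

Set Implicit Arguments.
Unset Strict Implicit.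
Unset Printing Implicit Defensive.

Definition linv (a : nat * bool) : nat * bool := (a.1, ~~ a.2).

Fixpoint nr (w : word) : bool :=
  match w with
  | a :: ((b :: _) as w') => ~~ ((a.1 == b.1) && (a.2 != b.2)) && nr w'
  | _ => true
  end.

Lemma nr_cons a w : nr (a :: w) -> nr w.
Proof. by case: w => [|b w] //= /andP[]. Qed.

Lemma nr_push a w : nr w -> nr (push a w).
Proof.
case: w => [|b w] // H; rewrite /push.
case: ifP => [_|Hf]; first exact: nr_cons H.
by rewrite /= Hf.
Qed.

Lemma nr_foldr u w : nr w -> nr (foldr push w u).
Proof. by elim: u => //= a u IH Hw; apply: nr_push; apply: IH. Qed.

Lemma nr_reduce u : nr (reduce u).
Proof. exact: nr_foldr. Qed.

Lemma push_linv a y : nr y -> push a (push (linv a) y) = y.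
Proof.
case: a => x e; case: y => [|[z f] y'] /=.
  by rewrite eqxx; case: e.
rewrite /linv /=.
case: (boolP ((x == z) && (~~ e != f))) => [/andP[/eqP xz ef]|Hn] Hy.
  subst z; have fe : f = e by clear Hy; move: ef; case: e; case: f.
  subst f.
  case: y' Hy => [|[u g] y''] //= /andP[H1 _].
  by rewrite (negbTE H1).
by rewrite /= eqxx /=; clear; case: e.
Qed.

Lemma linvK a : linv (linv a) = a.
Proof. by case: a => x [] . Qed.

Lemma foldr_push_push a z w : nr w ->
  foldr push w (push a z) = push a (foldr push w z).
Proof.
move=> Hw; case: z => [|b z'] //=.
case: ifP => // /andP[/eqP ab ne].
have -> : b = linv a by case: a b ab ne => x e [y f] /= -> ; case: e; case: f.
rewrite push_linv //; exact: nr_foldr.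
Qed.

Lemma foldr_reduce u w : nr w -> foldr push w u = foldr push w (reduce u).
Proof.
move=> Hw; elim: u => //= a u IH.
by rewrite IH /reduce foldr_push_push.
Qed.

Lemma reduceK u : reduce (reduce u) = reduce u.
Proof. by rewrite /reduce -foldr_reduce. Qed.

Lemma reduce_cat u v : reduce (u ++ v) = foldr push (reduce v) (reduce u).
Proof. by rewrite /reduce foldr_cat -foldr_reduce //; exact: nr_reduce. Qed.

Lemma weq_refl u : weq u u. Proof. by []. Qed.
Lemma weq_sym u v : weq u v -> weq v u. Proof. by rewrite /weq => ->. Qed.
Lemma weq_trans u v w : weq u v -> weq v w -> weq u w.
Proof. by rewrite /weq => ->. Qed.

Lemma weq_cat u u' v v' : weq u u' -> weq v v' -> weq (u ++ v) (u' ++ v').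
Proof. by rewrite /weq !reduce_cat => -> ->. Qed.

Lemma weq_reduce u : weq (reduce u) u.
Proof. exact: reduceK. Qed.

Lemma winv_cons a c : winv (a :: c) = winv c ++ [:: linv a].
Proof. by rewrite /winv /= rev_cons cats1. Qed.

Lemma winv_cat u v : winv (u ++ v) = winv v ++ winv u.
Proof. by rewrite /winv map_cat rev_cat. Qed.

Lemma winvK c : winv (winv c) = c.
Proof.
rewrite /winv map_rev revK -map_comp.
by rewrite -[RHS]map_id; apply: eq_map => [[x e]] /=; rewrite negbK.
Qed.

Lemma weq_cancel a x : weq [:: linv a, a & x] x.
Proof.
rewrite /weq /reduce /=.
have := push_linv (linv a) (nr_reduce x); rewrite linvK; exact.
Qed.

Lemma weq_winvl c : weq (winv c ++ c) [::].
Proof.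
elim: c => // a c IH.
rewrite winv_cons -catA /=.
apply: weq_trans (weq_cat (weq_refl (winv c)) (weq_cancel a c)) IH.
Qed.

Lemma weq_winvr c : weq (c ++ winv c) [::].
Proof. have := weq_winvl (winv c); by rewrite winvK. Qed.

Definition lsum (k : nat) (a : nat * bool) : Z :=
  if a.1 == k then (if a.2 then (-1)%Z else 1%Z) else 0%Z.
Definition expsum (k : nat) (w : word) : Z := foldr (fun a s => (lsum k a + s)%Z) 0%Z w.

Lemma expsum_cat k u v : expsum k (u ++ v) = (expsum k u + expsum k v)%Z.
Proof. elim: u => //= a u ->; lia. Qed.

Lemma expsum_push k a w : expsum k (push a w) = (lsum k a + expsum k w)%Z.
Proof.
case: w => [|b w] //=.
case: ifP => //= /andP[/eqP ab ne].
suff: (lsum k a + lsum k b = 0)%Z by lia.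
rewrite /lsum ab; case: (_ == k) => //; case: a b ab ne => x e [y f] /= _.
by case: e; case: f.
Qed.

Lemma expsum_reduce k w : expsum k (reduce w) = expsum k w.
Proof. elim: w => //= a w <-; exact: expsum_push. Qed.

Lemma weq_expsum k u v : weq u v -> expsum k u = expsum k v.
Proof. by move=> H; rewrite -expsum_reduce H expsum_reduce. Qed.

Lemma expsum_winv k c : expsum k (winv c) = (- expsum k c)%Z.
Proof.
elim: c => // a c IH; rewrite winv_cons expsum_cat IH.
have -> : expsum k [:: linv a] = lsum k (linv a) by rewrite /= Z.add_0_r.
have -> : expsum k (a :: c) = (lsum k a + expsum k c)%Z by [].
rewrite /lsum /linv.
case: (a.1 == k); case: a.2; cbn [fst snd negb]; lia.
Qed.

Lemma weq_nil_cancel z : weq z (z ++ z) -> weq z [::].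
Proof.
move=> H.
have H1 : weq (winv z ++ z) (winv z ++ (z ++ z)) := weq_cat (weq_refl _) H.
rewrite catA in H1.
have H2 := weq_cat (weq_winvl z) (weq_refl z).
apply: weq_sym; apply: weq_trans (weq_sym (weq_winvl z)) _.
by apply: weq_trans H1 H2.
Qed.

Lemma weq_inv_unique x y : weq (x ++ y) [::] -> weq x (winv y).
Proof.
move=> H.
have H1 : weq (x ++ (y ++ winv y)) x.
  have := weq_cat (weq_refl x) (weq_winvr y); by rewrite cats0.
rewrite catA in H1.
have H2 := weq_cat H (weq_refl (winv y)).
exact: weq_trans (weq_sym H1) H2.
Qed.

Lemma Fhom_resp phi u v : is_Fhom phi -> weq u v -> weq (phi u) (phi v).
Proof. by case=> H _; apply: H. Qed.

Lemma Fhom_cat phi u v : is_Fhom phi -> weq (phi (u ++ v)) (phi u ++ phi v).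
Proof. by case=> _ H; apply: H. Qed.

Lemma Fhom_nil phi : is_Fhom phi -> weq (phi [::]) [::].
Proof. by move=> H; apply: weq_nil_cancel; have := Fhom_cat [::] [::] H. Qed.

Lemma Fhom_winv phi c : is_Fhom phi -> weq (phi (winv c)) (winv (phi c)).
Proof.
move=> H; apply: weq_inv_unique.
apply: weq_trans (weq_sym (Fhom_cat _ _ H)) _.
apply: weq_trans (Fhom_resp H (weq_winvl c)) _.
exact: Fhom_nil.
Qed.

Definition cj (c u : word) : word := winv c ++ u ++ c.

Lemma weq_cj c u v : weq u v -> weq (cj c u) (cj c v).
Proof. by move=> H; apply: weq_cat (weq_refl _) (weq_cat H (weq_refl _)). Qed.

Lemma cj_comp c d u : cj c (cj d u) = cj (d ++ c) u.
Proof. by rewrite /cj winv_cat !catA. Qed.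

Lemma cj_nil u : weq (cj [::] u) u.
Proof. by rewrite /cj cats0. Qed.

Lemma cj_inv c u : weq (cj (winv c) (cj c u)) u.
Proof.
rewrite cj_comp /cj winv_cat winvK.
have H1 := weq_winvr c.
have := weq_cat H1 (weq_cat (weq_refl u) H1); by rewrite cats0 -!catA.
Qed.

Lemma Fhom_cj phi c u : is_Fhom phi -> weq (phi (cj c u)) (cj (phi c) (phi u)).
Proof.
move=> H; rewrite /cj.
apply: weq_trans (Fhom_cat _ _ H) _.
apply: weq_cat; first exact: Fhom_winv.
exact: Fhom_cat.
Qed.

Lemma Fhom_comp phi psi : is_Fhom phi -> is_Fhom psi -> is_Fhom (fun w => phi (psi w)).
Proof.
move=> Hp Hq; split=> u v.
  by move=> H; apply: Fhom_resp Hp _; apply: Fhom_resp Hq _.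
apply: weq_trans (Fhom_resp Hp (Fhom_cat u v Hq)) _.
exact: Fhom_cat.
Qed.

Lemma is_aut_mul p q : is_aut p -> is_aut q -> is_aut (aut_mul p q).
Proof.
case=> [Hp1 [Hp2 [Hp3 Hp4]]] [Hq1 [Hq2 [Hq3 Hq4]]].
split; first exact: Fhom_comp.
split; first exact: Fhom_comp.
split=> w /=.
  apply: weq_trans _ (Hp3 w); apply: Fhom_resp Hp1 _; exact: Hq3.
apply: weq_trans _ (Hq4 w); apply: Fhom_resp Hq2 _; exact: Hp4.
Qed.

Lemma is_aut_inv p : is_aut p -> is_aut (aut_inv p).
Proof. by case=> [H1 [H2 [H3 H4]]]; split=> //; split=> //; split. Qed.

Lemma is_aut_one : is_aut aut_one.
Proof.
have H : is_Fhom (fun w => w) by split=> // u v.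
by split=> //; split=> //; split.
Qed.

Record SGE (E : aut_carrier -> aut_carrier -> Prop) : Prop := {
  E_refl : forall x, is_aut x -> E x x;
  E_sym : forall x y, is_aut x -> is_aut y -> E x y -> E y x;
  E_trans : forall x y z, is_aut x -> is_aut y -> is_aut z -> E x y -> E y z -> E x z;
  E_mul : forall x x' y y', is_aut x -> is_aut x' -> is_aut y -> is_aut y' ->
     E x x' -> E y y' -> E (aut_mul x y) (aut_mul x' y');
  E_inv : forall x x', is_aut x -> is_aut x' -> E x x' -> E (aut_inv x) (aut_inv x');
  E_ae : forall x y, is_aut x -> is_aut y -> aut_eq x y -> E x y }.

Lemma SGE_aut : SGE aut_eq.
Proof.
split.
- by move=> x _ w.
- by move=> x y _ _ H w; apply: weq_sym.
- by move=> x y z _ _ _ H1 H2 w; apply: weq_trans (H1 w) (H2 w).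
- move=> x x' y y' Hx Hx' Hy Hy' H1 H2 w /=.
  apply: weq_trans (H1 _) _; apply: Fhom_resp (H2 w); by case: Hx'.
- move=> x x' [Hx1 [Hx2 [Hx3 Hx4]]] [Hx1' [Hx2' [Hx3' Hx4']]] H w /=.
  apply: weq_sym; apply: weq_trans (weq_sym (Hx4 (x'.2 w))) _.
  apply: Fhom_resp Hx2 _.
  by apply: weq_trans (H _) (Hx3' w).
- by [].
Qed.

Lemma out_eqE p q : out_eq p q <-> exists c, forall w, weq (p.1 w) (cj c (q.1 w)).
Proof. by []. Qed.

Lemma SGE_out : SGE out_eq.
Proof.
split.
- by move=> x _; apply/out_eqE; exists [::] => w; apply: weq_sym; apply: cj_nil.
- move=> x y _ _ /out_eqE [c H]; apply/out_eqE; exists (winv c) => w.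
  apply: weq_sym; apply: weq_trans (weq_cj (winv c) (H w)) _; exact: cj_inv.
- move=> x y z _ _ _ /out_eqE [c H1] /out_eqE [d H2]; apply/out_eqE; exists (d ++ c) => w.
  rewrite -cj_comp; apply: weq_trans (H1 w) _; apply: weq_cj; exact: H2.
- move=> x x' y y' Hx [Hx1' _] Hy Hy' /out_eqE [c H1] /out_eqE [d H2].
  apply/out_eqE; exists (x'.1 d ++ c) => w /=.
  rewrite -cj_comp; apply: weq_trans (H1 _) _; apply: weq_cj.
  apply: weq_trans (Fhom_resp Hx1' (H2 w)) _.
  exact: Fhom_cj.
- move=> x x' [Hx1 [Hx2 [Hx3 Hx4]]] [Hx1' [Hx2' [Hx3' Hx4']]] /out_eqE [c H].
  apply/out_eqE; exists (x'.2 (winv c)) => w /=.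
  have A : weq (x'.1 (x.2 w)) (cj (winv c) w).
    apply: weq_trans (weq_sym (cj_inv c _)) _.
    apply: weq_cj; apply: weq_trans (weq_sym (H _)) _; exact: Hx3.
  apply: weq_trans (weq_sym (Hx4' (x.2 w))) _.
  apply: weq_trans (Fhom_resp Hx2' A) _.
  exact: Fhom_cj.
- move=> x y _ _ H; apply/out_eqE; exists [::] => w /=.
  by apply: weq_trans (H w) (weq_sym (cj_nil _)).
Qed.

Fixpoint gp (x : aut_carrier) (n : nat) : aut_carrier :=
  match n with 0 => aut_one | n'.+1 => aut_mul x (gp x n') end.

Lemma is_aut_gp x n : is_aut x -> is_aut (gp x n).
Proof. move=> H; elim: n => /= [|n IH]; [exact: is_aut_one | exact: is_aut_mul]. Qed.

Ltac autd := repeat first [ assumption | apply: is_aut_mul | apply: is_aut_inv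
  | apply: is_aut_one | apply: is_aut_gp ].

Section SetoidGroup.
Variable E : aut_carrier -> aut_carrier -> Prop.
Variable HE : SGE E.

Let Er := E_refl HE.
Let Es := E_sym HE.
Let Et := E_trans HE.
Let Em := E_mul HE.
Let Ei := E_inv HE.
Let Ea := E_ae HE.

Lemma smulA x y z : is_aut x -> is_aut y -> is_aut z ->
  E (aut_mul (aut_mul x y) z) (aut_mul x (aut_mul y z)).
Proof. by move=> Hx Hy Hz; apply: Ea; autd. Qed.

Lemma smul1g x : is_aut x -> E (aut_mul aut_one x) x.
Proof. by move=> Hx; apply: Ea; autd. Qed.

Lemma smulg1 x : is_aut x -> E (aut_mul x aut_one) x.
Proof. by move=> Hx; apply: Ea; autd. Qed.

Lemma smulVg x : is_aut x -> E (aut_mul (aut_inv x) x) aut_one.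
Proof.
move=> Hx; apply: Ea; autd.
by move=> w /=; case: Hx => [_ [_ [_ H]]]; apply: H.
Qed.

Lemma smulgV x : is_aut x -> E (aut_mul x (aut_inv x)) aut_one.
Proof.
move=> Hx; apply: Ea; autd.
by move=> w /=; case: Hx => [_ [_ [H _]]]; apply: H.
Qed.

Lemma smulg_cancel x a b : is_aut x -> is_aut a -> is_aut b ->
  E (aut_mul x a) (aut_mul x b) -> E a b.
Proof.
move=> Hx Ha Hb H.
have K : forall c, is_aut c -> E (aut_mul (aut_inv x) (aut_mul x c)) c.
  move=> c Hc; apply: Ea; autd.
  by move=> w /=; case: Hx => [_ [_ [_ H4]]]; apply: H4.
apply: (Et (y := aut_mul (aut_inv x) (aut_mul x a))); autd.
  by apply: Es; autd; apply: K.
apply: (Et (y := aut_mul (aut_inv x) (aut_mul x b))); autd; last exact: K.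
by apply: Em; autd; apply: Er; autd.
Qed.

Lemma gp_add x m n : is_aut x -> E (gp x (m + n)) (aut_mul (gp x m) (gp x n)).
Proof.
move=> Hx; apply: Ea; autd.
elim: m => [|m IH] w /=; first by [].
by apply: Fhom_resp (IH w); case: Hx.
Qed.

Lemma gp_mul x d j : is_aut x -> E (gp x (d * j)) (gp (gp x d) j).
Proof.
move=> Hx; elim: j => [|j IH]; first by rewrite muln0; apply: Er; autd.
rewrite mulnS /=.
apply: (Et (y := aut_mul (gp x d) (gp x (d * j)))); autd.
  exact: gp_add.
by apply: Em; autd; apply: Er; autd.
Qed.

Lemma gp_cong x y n : is_aut x -> is_aut y -> E x y -> E (gp x n) (gp y n).
Proof.
move=> Hx Hy H; elim: n => [|n IH] /=; first by apply: Er; autd.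
by apply: Em; autd.
Qed.

End SetoidGroup.

Definition pm (s : nat -> nat) (w : word) : word := map (fun a => (s a.1, a.2)) w.
Definition paut (s s' : nat -> nat) : aut_carrier := (pm s, pm s').

Lemma pm_comp s t w : pm s (pm t w) = pm (fun n => s (t n)) w.
Proof. by rewrite /pm -map_comp. Qed.

Lemma pm_ext s t w : (forall n, s n = t n) -> pm s w = pm t w.
Proof. by move=> H; apply: eq_map => a; rewrite H. Qed.

Lemma pm_id w : pm id w = w.
Proof. by rewrite /pm -[RHS]map_id; apply: eq_map => [[]]. Qed.

Lemma pm_push s a w : injective s -> pm s (push a w) = push (s a.1, a.2) (pm s w).
Proof.
move=> Hs; case: w => [|b w] //=.
rewrite (eqtype.inj_eq Hs); by case: ifP.
Qed.

Lemma pm_reduce s w : injective s -> pm s (reduce w) = reduce (pm s w).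
Proof. by move=> Hs; elim: w => //= a w IH; rewrite pm_push // IH. Qed.

Lemma pm_Fhom s : injective s -> is_Fhom (pm s).
Proof.
move=> Hs; split=> u v.
  by rewrite /weq -!pm_reduce // => ->.
by rewrite /pm map_cat.
Qed.

Lemma is_aut_paut s s' : (forall n, s (s' n) = n) -> (forall n, s' (s n) = n) ->
  is_aut (paut s s').
Proof.
move=> H1 H2.
have Is : injective s by apply: (can_inj H2).
have Is' : injective s' by apply: (can_inj H1).
split; first exact: pm_Fhom.
split; first exact: pm_Fhom.
split=> w /=; rewrite pm_comp (@pm_ext _ id) ?pm_id //.
Qed.

Lemma paut_mul s s' t t' :
  aut_eq (aut_mul (paut s s') (paut t t')) (paut (fun n => s (t n)) (fun n => t' (s' n))).
Proof. by move=> w /=; rewrite pm_comp. Qed.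

Lemma paut_gp s s' n :
  aut_eq (gp (paut s s') n) (paut (iter n s) (iter n s')).
Proof.
move=> w; rewrite /weq; congr reduce.
elim: n w => [|n IH] w /=; first by rewrite pm_id.
rewrite IH pm_comp; apply: pm_ext => k; by rewrite iterS.
Qed.

Lemma paut_ext s s' t t' : (forall n, s n = t n) -> aut_eq (paut s s') (paut t t').
Proof. by move=> H w /=; rewrite (pm_ext _ H). Qed.

Lemma paut_nontriv s s' n : s n <> n -> ~ out_eq (paut s s') aut_one.
Proof.
move=> Hn /out_eqE [c H].
have := weq_expsum n (H [:: (n, false)]).
rewrite /cj !expsum_cat expsum_winv /=.
rewrite /lsum /= eqxx.
have -> : (s n == n) = false by apply/eqP.
lia.
Qed.

Lemma paut_nontriv_aut s s' n : is_aut (paut s s') -> s n <> n -> ~ aut_eq (paut s s') aut_one.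
Proof.
move=> Ha Hn H; apply: (paut_nontriv Hn).
exact: (E_ae SGE_out Ha is_aut_one H).
Qed.

Definition blk B (t : nat -> nat) n := B * (n %/ B) + t (n %% B).

Lemma divmodB B q j : 0 < B -> j < B -> (B * q + j) %/ B = q /\ (B * q + j) %% B = j.
Proof.
move=> HB Hj; rewrite mulnC divnMDl // divn_small // addn0 modnMDl modn_small //.
Qed.

Lemma blk_dec B t q j : 0 < B -> j < B -> blk B t (B * q + j) = B * q + t j.
Proof. by move=> HB Hj; rewrite /blk; case: (divmodB q HB Hj) => -> ->. Qed.

Lemma blkE B n : n = B * (n %/ B) + n %% B.
Proof. by rewrite mulnC -divn_eq. Qed.

Lemma blk_comp B t t' n : 0 < B -> (forall j, j < B -> t' j < B) ->
  blk B t (blk B t' n) = blk B (fun j => t (t' j)) n.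
Proof.
move=> HB Ht; have -> : blk B t' n = B * (n %/ B) + t' (n %% B) by [].
by rewrite blk_dec // Ht // ltn_pmod.
Qed.

Lemma blk_ext B t t' n : 0 < B -> (forall j, j < B -> t j = t' j) -> blk B t n = blk B t' n.
Proof. by move=> HB H; rewrite /blk H // ltn_pmod. Qed.

Lemma blk_id B n : blk B id n = n.
Proof. by rewrite /blk /= -blkE. Qed.

Lemma blk_div B t n : 0 < B -> (forall j, j < B -> t j < B) -> blk B t n %/ B = n %/ B.
Proof.
move=> HB Ht; have Hj : t (n %% B) < B by apply: Ht; rewrite ltn_pmod.
by rewrite /blk; case: (divmodB (n %/ B) HB Hj) => ->.
Qed.

Lemma blk_iter B t k n : 0 < B -> (forall j, j < B -> t j < B) ->
  iter k (blk B t) n = blk B (iter k t) n.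
Proof.
move=> HB Ht; elim: k => [|k IH] /=; first by rewrite /blk /= -blkE.
rewrite IH blk_comp //.
by move=> j Hj; elim: k {IH} => //= k IHk; apply: Ht.
Qed.

Lemma blk_refine b K t n : 0 < b -> 0 < K -> blk b t n = blk (b * K) (blk b t) n.
Proof.
move=> Hb HK.
have HbK : 0 < b * K by rewrite muln_gt0 Hb HK.
have -> : blk (b * K) (blk b t) n = b * K * (n %/ (b * K)) + blk b t (n %% (b * K)) by [].
set q := n %/ (b * K); set j := n %% (b * K).
have E1 : n = b * (K * q + j %/ b) + j %% b.
  by rewrite mulnDr mulnA -addnA -blkE /q /j -blkE.
rewrite {1}E1 blk_dec ?ltn_pmod //.
by rewrite /blk mulnDr mulnA addnA.
Qed.

Section Roots.
Variable m : nat.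
Variable Hm : 0 < m.

Definition enc p := 3 * (p %% m) + p %/ m.
Definition dec j := (j %% 3) * m + j %/ 3.
Definition tm j := enc ((dec j + 1) %% (3 * m)).
Definition tm' j := enc ((dec j + (3 * m).-1) %% (3 * m)).

Lemma enc_lt p : p < 3 * m -> enc p < 3 * m.
Proof.
move=> Hp; rewrite /enc.
have h1 : p %% m < m by rewrite ltn_pmod.
have h2 : p %/ m < 3 by rewrite ltn_divLR.
move: h1 h2; generalize (p %% m) (p %/ m) => x y; lia.
Qed.

Lemma dec_lt j : j < 3 * m -> dec j < 3 * m.
Proof.
move=> Hj; rewrite /dec.
have h1 : j %/ 3 < m by rewrite ltn_divLR // mulnC.
have h2 : j %% 3 < 3 by rewrite ltn_pmod.
move: h1 h2; generalize (j %/ 3) (j %% 3) => x [|[|[|y]]] hx // _; lia.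
Qed.

Lemma dec_enc p : p < 3 * m -> dec (enc p) = p.
Proof.
move=> Hp; rewrite /dec /enc.
have h2 : p %/ m < 3 by rewrite ltn_divLR.
case: (divmodB (p %% m) (isT : 0 < 3) h2) => -> ->.
by rewrite -divn_eq.
Qed.

Lemma enc_dec j : j < 3 * m -> enc (dec j) = j.
Proof.
move=> Hj; rewrite /dec /enc.
have h1 : j %/ 3 < m by rewrite ltn_divLR // mulnC.
rewrite [(j %% 3) * m]mulnC; case: (divmodB (j %% 3) Hm h1) => -> ->.
by rewrite mulnC -divn_eq.
Qed.

Lemma tm_lt j : tm j < 3 * m.
Proof. by rewrite /tm enc_lt // ltn_pmod // muln_gt0. Qed.

Lemma tm'_lt j : tm' j < 3 * m.
Proof. by rewrite /tm' enc_lt // ltn_pmod // muln_gt0. Qed.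

Lemma iter_tm k j : j < 3 * m -> iter k tm j = enc ((dec j + k) %% (3 * m)).
Proof.
move=> Hj; have H3 : 0 < 3 * m by rewrite muln_gt0.
elim: k => [|k IH] /=; first by rewrite addn0 modn_small ?enc_dec ?dec_lt.
rewrite IH /tm dec_enc ?ltn_pmod //.
by rewrite modnDml -addnA addn1.
Qed.

Lemma tmK j : j < 3 * m -> tm' (tm j) = j.
Proof.
move=> Hj; have H3 : 0 < 3 * m by rewrite muln_gt0.
rewrite /tm' /tm dec_enc ?ltn_pmod // modnDml -addnA add1n prednK //.
by rewrite modnDr modn_small ?enc_dec ?dec_lt.
Qed.

Lemma tm'K j : j < 3 * m -> tm (tm' j) = j.
Proof.
move=> Hj; have H3 : 0 < 3 * m by rewrite muln_gt0.
rewrite /tm' /tm dec_enc ?ltn_pmod // modnDml -addnA addn1 prednK //.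
by rewrite modnDr modn_small ?enc_dec ?dec_lt.
Qed.

Lemma iter_tm_m j : j < 3 * m -> iter m tm j = 3 * (j %/ 3) + (j %% 3 + 1) %% 3.
Proof.
move=> Hj; rewrite iter_tm // /dec.
have h1 : j %/ 3 < m by rewrite ltn_divLR // mulnC.
have h2 : j %% 3 < 3 by rewrite ltn_pmod.
move: h1 h2; generalize (j %/ 3) (j %% 3) => b r hb hr.
rewrite /enc.
case: r hr => [|[|[|r]]] // _.
- have -> : 0 * m + b + m = m * 1 + b by lia.
  rewrite (modn_small (_ : m * 1 + b < 3 * m)); last by lia.
  by case: (divmodB 1 Hm hb) => -> ->.
- have -> : 1 * m + b + m = m * 2 + b by lia.
  rewrite (modn_small (_ : m * 2 + b < 3 * m)); last by lia.
  by case: (divmodB 2 Hm hb) => -> ->.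
- have -> : 2 * m + b + m = 3 * m + b by lia.
  rewrite modnDl (modn_small (_ : b < 3 * m)); last by lia.
  by rewrite modn_small // divn_small // addn0.
Qed.

End Roots.

Definition c3 r := (r + 1) %% 3.
Definition c3' r := (r + 2) %% 3.
Definition gam := blk 3 c3.
Definition gam' := blk 3 c3'.
Definition hr m := blk (3 * m) (tm m).
Definition hr' m := blk (3 * m) (tm' m).

Lemma c3_lt r : c3 r < 3. Proof. exact: ltn_pmod. Qed.
Lemma c3'_lt r : c3' r < 3. Proof. exact: ltn_pmod. Qed.

Lemma gamK n : gam' (gam n) = n.
Proof.
rewrite /gam /gam' blk_comp // => [|j _]; last exact: c3_lt.
rewrite -[RHS](blk_id 3); apply: blk_ext => // -[|[|[|j]]] //.
Qed.

Lemma gam'K n : gam (gam' n) = n.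
Proof.
rewrite /gam /gam' blk_comp // => [|j _]; last exact: c3'_lt.
rewrite -[RHS](blk_id 3); apply: blk_ext => // -[|[|[|j]]] //.
Qed.

Lemma gam0 : gam 0 = 1. Proof. by []. Qed.

Lemma hrK m n : 0 < m -> hr' m (hr m n) = n.
Proof.
move=> Hm; have H3 : 0 < 3 * m by rewrite muln_gt0.
rewrite /hr /hr' blk_comp // => [|j _]; last exact: tm_lt.
by rewrite -[RHS](blk_id (3 * m)); apply: blk_ext => // j Hj; rewrite tmK.
Qed.

Lemma hr'K m n : 0 < m -> hr m (hr' m n) = n.
Proof.
move=> Hm; have H3 : 0 < 3 * m by rewrite muln_gt0.
rewrite /hr /hr' blk_comp // => [|j _]; last exact: tm'_lt.
by rewrite -[RHS](blk_id (3 * m)); apply: blk_ext => // j Hj; rewrite tm'K.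
Qed.

Lemma hr_iter m n : 0 < m -> iter m (hr m) n = gam n.
Proof.
move=> Hm; have H3 : 0 < 3 * m by rewrite muln_gt0.
rewrite /hr blk_iter // => [|j _]; last exact: tm_lt.
rewrite /gam (blk_refine c3 n (isT : 0 < 3) Hm).
by apply: blk_ext => // j Hj; rewrite iter_tm_m.
Qed.

Definition mkG (E : aut_carrier -> aut_carrier -> Prop) : GroupData :=
  {| gT := aut_carrier; gD := is_aut; Defs.geq := E;
     gmul := aut_mul; ginv := aut_inv; gone := aut_one |}.

Lemma is_aut_gam : is_aut (paut gam gam').
Proof. apply: is_aut_paut; [exact: gam'K | exact: gamK]. Qed.

Lemma rf_kill E (HE : SGE E) (H : finGroupType) (f : aut_carrier -> H) :
  @hom_to_fin (mkG E) H f -> f (paut gam gam') = 1%g.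
Proof.
case=> [Hf1 Hf2].
set N := #|H|.
have HN : 0 < N by apply/card_gt0P; exists 1%g.
set y := paut (hr N) (hr' N).
have Hy : is_aut y by apply: is_aut_paut => n; [exact: hr'K | exact: hrK].
have f1 : f aut_one = 1%g.
  have h : f aut_one = (f aut_one * f aut_one)%g := Hf2 _ _ is_aut_one is_aut_one.
  by move: h => /(congr1 (mulg (f aut_one)^-1)); rewrite mulVg mulKg.
have fp : forall n, f (gp y n) = (f y ^+ n)%g.
  elim=> [|n IH] //=; rewrite Hf2 //; last exact: is_aut_gp.
  by rewrite IH expgS.
have : f (gp y N) = 1%g.
  by rewrite fp /N -cardsT expg_cardG // inE.
rewrite (Hf1 _ (paut gam gam')) //; [exact: is_aut_gp | exact: is_aut_gam |].
apply: (E_ae HE); [exact: is_aut_gp | exact: is_aut_gam |].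
move=> w; apply: weq_trans (paut_gp _ _ _ w) _.
by apply: paut_ext => n; rewrite hr_iter.
Qed.

Lemma gam_nontriv_out : ~ out_eq (paut gam gam') aut_one.
Proof. by apply: (@paut_nontriv _ _ 0); rewrite gam0. Qed.

Lemma gam_nontriv_aut : ~ aut_eq (paut gam gam') aut_one.
Proof. by apply: (@paut_nontriv_aut _ _ 0); [exact: is_aut_gam | rewrite gam0]. Qed.

Lemma not_rf_aut : ~ residually_finite AutFinf.
Proof.
move=> H; have [Hf [f [Hh Hne]]] := H _ is_aut_gam gam_nontriv_aut.
by apply: Hne; apply: (@rf_kill aut_eq SGE_aut).
Qed.

Lemma not_rf_out : ~ residually_finite OutFinf.
Proof.
move=> H; have [Hf [f [Hh Hne]]] := H _ is_aut_gam gam_nontriv_out.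
by apply: Hne; apply: (@rf_kill out_eq SGE_out).
Qed.

Definition BP L (s : nat -> nat) := forall n, s n %/ (3 * L`!) = n %/ (3 * L`!).

Lemma BP_S L s : BP L s -> BP L.+1 s.
Proof. by move=> H n; rewrite factS mulnCA mulnC divnMA H -divnMA. Qed.

Lemma BP_mono L L' s : L <= L' -> BP L s -> BP L' s.
Proof.
move=> /subnK <-; elim: (L' - L) => [|k IH] H; first by rewrite add0n.
by rewrite addSn; apply: BP_S; apply: IH.
Qed.

Lemma BP_comp L s t : BP L s -> BP L t -> BP L (fun n => s (t n)).
Proof. by move=> Hs Ht n; rewrite Hs Ht. Qed.

Lemma BP_blk L B t : 0 < B -> (forall j, j < B -> t j < B) -> B %| 3 * L`! -> BP L (blk B t).
Proof.
move=> HB Ht /dvdnP [K HK] n; rewrite HK mulnC !divnMA blk_div //.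
Qed.

Definition PP (s s' : nat -> nat) :=
  (forall n, s (s' n) = n) /\ (forall n, s' (s n) = n) /\ exists L, BP L s /\ BP L s'.

Lemma PP_inv s s' : PP s s' -> PP s' s.
Proof. by case=> H1 [H2 [L [B1 B2]]]; split=> //; split=> //; exists L. Qed.

Lemma PP_id : PP id id.
Proof. by split=> //; split=> //; exists 0. Qed.

Lemma PP_comp s s' t t' : PP s s' -> PP t t' ->
  PP (fun n => s (t n)) (fun n => t' (s' n)).
Proof.
case=> H1 [H2 [L [B1 B2]]] [K1 [K2 [L' [C1 C2]]]].
split; first by move=> n; rewrite K1 H1.
split; first by move=> n; rewrite H2 K2.
exists (maxn L L'); split; apply: BP_comp.
- exact: BP_mono (leq_maxl L L') B1.
- exact: BP_mono (leq_maxr L L') C1.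
- exact: BP_mono (leq_maxr L L') C2.
- exact: BP_mono (leq_maxl L L') B2.
Qed.

Lemma PP_aut s s' : PP s s' -> is_aut (paut s s').
Proof. by case=> H1 [H2 _]; apply: is_aut_paut. Qed.

Lemma PP_torsion s s' : PP s s' -> exists N, 0 < N /\ forall n, iter N s n = n.
Proof.
case=> H1 [H2 [L [B1 _]]].
set M := 3 * L`!.
have HM : 0 < M by rewrite /M muln_gt0 fact_gt0.
exists #|{perm 'I_M}|; split; first by apply/card_gt0P; exists 1%g.
move=> n.
set q := n %/ M.
pose f (i : 'I_M) : 'I_M := Ordinal (ltn_pmod (s (M * q + i)) HM).
have Kf : forall i : 'I_M, s (M * q + i) = M * q + f i.
  move=> i /=; rewrite {1}(blkE M (s (M * q + i))) B1.
  by case: (divmodB q HM (ltn_ord i)) => ->.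
have f_inj : injective f.
  move=> i1 i2 Hi; apply: val_inj; apply/eqP.
  rewrite -(eqn_add2l (M * q)); apply/eqP.
  by apply: (can_inj H2); rewrite !Kf Hi.
have Ki : forall k (i : 'I_M), iter k s (M * q + i) = M * q + iter k f i.
  move=> k i; elim: k => [|k IH]; first by [].
  by rewrite iterS IH Kf iterS.
have p1 : (perm f_inj ^+ #|{perm 'I_M}|)%g = 1%g.
  by rewrite -cardsT expg_cardG // inE.
set j : 'I_M := Ordinal (ltn_pmod n HM).
have En : n = M * q + j by rewrite /= -blkE.
rewrite En Ki; congr (_ + _); congr val.
by rewrite -(eq_iter (permE f_inj)) -permX p1 perm1.
Qed.

Definition r1t j := nth j [:: 0; 1; 3; 2; 4; 5] j.
Definition r2t j := nth j [:: 0; 4; 1; 2; 3; 5] j.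
Definition r2t' j := nth j [:: 0; 2; 3; 4; 1; 5] j.
Definition rho1 := blk 6 r1t.
Definition rho2 := blk 6 r2t.
Definition rho2' := blk 6 r2t'.

Lemma gam6 n : gam n = blk 6 (blk 3 c3) n.
Proof. exact: (blk_refine c3 n (isT : 0 < 3) (isT : 0 < 2)). Qed.
Lemma gam'6 n : gam' n = blk 6 (blk 3 c3') n.
Proof. exact: (blk_refine c3' n (isT : 0 < 3) (isT : 0 < 2)). Qed.

Lemma comm_id n :
  gam n = rho1 (gam' (rho1 (rho2 (gam' (rho2' (rho1 (gam (rho1 (rho2 (gam (rho2' n))))))))))).
Proof.
rewrite !gam6 !gam'6 /rho1 /rho2 /rho2' (blkE 6 n).
have : n %% 6 < 6 by rewrite ltn_pmod.
move: (n %/ 6) (n %% 6) => q [|[|[|[|[|[|j]]]]]] // _;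
  by rewrite !blk_dec.
Qed.

Lemma rho1K n : rho1 (rho1 n) = n.
Proof.
rewrite /rho1 (blkE 6 n).
have : n %% 6 < 6 by rewrite ltn_pmod.
by move: (n %/ 6) (n %% 6) => q [|[|[|[|[|[|j]]]]]] // _; rewrite !blk_dec.
Qed.

Lemma rho2K n : rho2' (rho2 n) = n.
Proof.
rewrite /rho2 /rho2' (blkE 6 n).
have : n %% 6 < 6 by rewrite ltn_pmod.
by move: (n %/ 6) (n %% 6) => q [|[|[|[|[|[|j]]]]]] // _; rewrite !blk_dec.
Qed.

Lemma rho2'K n : rho2 (rho2' n) = n.
Proof.
rewrite /rho2 /rho2' (blkE 6 n).
have : n %% 6 < 6 by rewrite ltn_pmod.
by move: (n %/ 6) (n %% 6) => q [|[|[|[|[|[|j]]]]]] // _; rewrite !blk_dec.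
Qed.

Lemma r_lt (t : nat -> nat) : (forall j, j < 6 -> t j < 6) -> forall j, j < 6 -> t j < 6.
Proof. by []. Qed.

Lemma PP_rho1 : PP rho1 rho1.
Proof.
have Hr : forall j, j < 6 -> r1t j < 6 by move=> [|[|[|[|[|[|j]]]]]].
split; first exact: rho1K. split; first exact: rho1K.
by exists 2; split; apply: BP_blk.
Qed.

Lemma PP_rho2 : PP rho2 rho2'.
Proof.
have Hr : forall j, j < 6 -> r2t j < 6 by move=> [|[|[|[|[|[|j]]]]]].
have Hr' : forall j, j < 6 -> r2t' j < 6 by move=> [|[|[|[|[|[|j]]]]]].
split; first exact: rho2'K. split; first exact: rho2K.
by exists 2; split; apply: BP_blk.
Qed.

Lemma PP_hr m : 0 < m -> PP (hr m) (hr' m).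
Proof.
move=> Hm; have H3 : 0 < 3 * m by rewrite muln_gt0.
split; first by move=> n; apply: hr'K. split; first by move=> n; apply: hrK.
have Hd : 3 * m %| 3 * m`! by rewrite dvdn_pmul2l // dvdn_fact // Hm leqnn.
exists m; split; apply: BP_blk => // j _; [exact: tm_lt | exact: tm'_lt].
Qed.

Definition SS (E : aut_carrier -> aut_carrier -> Prop) (x : aut_carrier) :=
  is_aut x /\ exists s s', PP s s' /\ E x (paut s s').

Lemma SS_D E x : SS E x -> is_aut x. Proof. by case. Qed.

Lemma SS_paut E (HE : SGE E) s s' : PP s s' -> SS E (paut s s').
Proof.
move=> H; have Ha := PP_aut H.
by split=> //; exists s, s'; split=> //; apply: (E_refl HE).
Qed.

Lemma SS_subgroup E (HE : SGE E) : @subgroup (mkG E) (SS E).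
Proof.
split; first by move=> x []. split.
  split; first exact: is_aut_one.
  exists id, id; split; first exact: PP_id.
  apply: (E_ae HE); [exact: is_aut_one | exact: (PP_aut PP_id) |].
  by move=> w /=; rewrite pm_id.
split.
  move=> x y [Hx [s [s' [Hs Ex]]]] [Hy [t [t' [Ht Ey]]]] /=.
  have Hxy := is_aut_mul Hx Hy.
  split=> //; exists (fun n => s (t n)), (fun n => t' (s' n)).
  split; first exact: PP_comp.
  have Hst := PP_aut (PP_comp Hs Ht).
  have H2 := is_aut_mul (PP_aut Hs) (PP_aut Ht).
  apply: (E_trans HE (y := aut_mul (paut s s') (paut t t'))) => //.
    by apply: (E_mul HE) => //; apply: PP_aut.
  by apply: (E_ae HE) => //; apply: paut_mul.
split.
  move=> x [Hx [s [s' [Hs Ex]]]] /=.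
  split; first exact: is_aut_inv.
  exists s', s; split; first exact: PP_inv.
  by apply: (E_inv HE Hx (PP_aut Hs) Ex).
move=> x y [Hx [s [s' [Hs Ex]]]] Hy Exy /=.
split=> //; exists s, s'; split=> //.
apply: (E_trans HE (y := x)) => //; [exact: PP_aut | exact: (E_sym HE)].
Qed.

Lemma rw_nseq (X : Type) (a : X * bool) n : reduced_word (nseq n a).
Proof.
elim: n => [|[|n] IH]; [exact: rw_nil | exact: rw_one |].
by apply: rw_cons => // -[_]; apply.
Qed.

Lemma not_cnf E (HE : SGE E) : ~ @contains_nonabelian_free (mkG E) (SS E).
Proof.
move=> [X [f [[x0 [y0 _]] [Hf Hw]]]].
have [Hx [s [s' [Hs Ex]]]] := Hf x0.
have [N [HN Hit]] := PP_torsion Hs.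
apply: (Hw (nseq N (x0, false))); first exact: rw_nseq.
  by clear Hit; case: N HN.
have -> : @eval_word (mkG E) X f (nseq N (x0, false)) = gp (f x0) N.
  by elim: (N) => //= k ->.
have Hp := PP_aut Hs.
apply: (E_trans HE (y := gp (paut s s') N)); do ?exact: is_aut_gp; first exact: is_aut_one.
  by apply: gp_cong.
apply: (E_ae HE); [exact: is_aut_gp | exact: is_aut_one |].
move=> w; apply: weq_trans (paut_gp _ _ _ w) _.
by rewrite /= (pm_ext _ Hit) pm_id.
Qed.

Lemma php_aux (A : Type) (P : nat -> A -> Prop) (l : list A) :
  forall I : seq nat, uniq I -> size l < size I ->
  (forall i, i \in I -> exists r, List.In r l /\ P i r) ->
  (forall i j r, i \in I -> j \in I -> P i r -> P j r -> i = j) -> False.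
Proof.
elim: l => [|a l IH] I HI Hs Hw Hinj.
  case: I Hs HI Hw Hinj => // i I' _ _ Hw _.
  by have [r [[] _]] := Hw i (mem_head _ _).
case: (classic (exists i0, i0 \in I /\ P i0 a)) => [[i0 [Hi0 Pa]] | Hno].
  apply: (IH (rem i0 I)).
  - exact: rem_uniq.
  - by rewrite size_rem //; move: Hs => /=; case: (size I).
  - move=> i; rewrite mem_rem_uniq // inE => /andP [ne Hi].
    have [r [[Er|Hr] Pr]] := Hw i Hi; last by exists r.
    subst r; by move: ne; rewrite (Hinj i i0 a Hi Hi0 Pr Pa) eqxx.
  - move=> i j r Hi Hj; apply: Hinj; [exact: mem_rem Hi | exact: mem_rem Hj].
apply: (IH I) => //; first exact: ltnW.
move=> i Hi; have [r [[Er|Hr] Pr]] := Hw i Hi; last by exists r.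
by subst r; exfalso; apply: Hno; exists i.
Qed.

Section Coset.
Variable E : aut_carrier -> aut_carrier -> Prop.
Variable HE : SGE E.

Lemma coset_diff y r ti tj i d : is_aut y -> is_aut r -> is_aut ti -> is_aut tj ->
  E (gp y i) (aut_mul r ti) -> E (gp y (i + d)) (aut_mul r tj) ->
  E (gp y d) (aut_mul (aut_inv ti) tj).
Proof.
move=> Hy Hr Hti Htj Ei Ej.
have h1 : E (aut_mul r (aut_mul ti (gp y d))) (aut_mul r tj).
  apply: (E_trans HE (y := aut_mul (aut_mul r ti) (gp y d))); autd.
    by apply: (E_sym HE); autd; apply: (smulA HE); autd.
  apply: (E_trans HE (y := aut_mul (gp y i) (gp y d))); autd.
    apply: (E_mul HE); autd; last by apply: (E_refl HE); autd.
    by apply: (E_sym HE); autd.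
  apply: (E_trans HE (y := gp y (i + d))); autd.
  by apply: (E_sym HE); autd; apply: (gp_add HE); autd.
have h2 : E (aut_mul ti (gp y d)) tj by apply: (smulg_cancel HE (x := r)); autd.
apply: (smulg_cancel HE (x := ti)); autd.
apply: (E_trans HE (y := tj)); autd.
apply: (E_ae HE); autd.
by move=> w /=; case: Hti => [_ [_ [H3 _]]]; apply: weq_sym; apply: H3.
Qed.

End Coset.

Lemma iter_conj (p p' h : nat -> nat) k n : (forall x, p (p' x) = x) -> (forall x, p' (p x) = x) ->
  iter k (fun x => p (h (p' x))) n = p (iter k h (p' n)).
Proof.
move=> H1 H; elim: k => [|k IH]; first by rewrite /= H1.
by rewrite iterS IH H iterS.
Qed.

Definition cp (p p' : nat -> nat) := paut (fun n => p (gam (p' n))) (fun n => p (gam' (p' n))).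

Lemma PP_cp p p' : PP p p' -> PP (fun n => p (gam (p' n))) (fun n => p (gam' (p' n))).
Proof.
move=> Hp.
have Hg : PP gam gam'.
  split; first exact: gam'K. split; first exact: gamK.
  have Hc : forall j, j < 3 -> c3 j < 3 by move=> j _; apply: c3_lt.
  have Hc' : forall j, j < 3 -> c3' j < 3 by move=> j _; apply: c3'_lt.
  by exists 0; split; apply: BP_blk.
exact: PP_comp (PP_comp Hp Hg) (PP_inv Hp).
Qed.

Lemma not_vs E (HE : SGE E) : ~ E (paut gam gam') aut_one ->
  ~ @virtually_solvable (mkG E) (SS E).
Proof.
move=> Hnt [T0 [HT0 [Hsub [[l [Hl Hcov]] [n0 Hsol]]]]].
case: HT0 => [T0D [T01 [T0m [T0i T0e]]]].
set k := size l.
set m := k`!.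
have Hm : 0 < m := fact_gt0 k.
have T0gp : forall x n, T0 x -> T0 (gp x n).
  by move=> x n Hx; elim: n => //= n IH; apply: T0m.
have [SSD [SS1 [SSm [SSi SSe]]]] := SS_subgroup HE.
have A : forall p p', PP p p' -> T0 (cp p p').
  move=> p p' Hp.
  have Hyp := PP_comp (PP_comp Hp (PP_hr Hm)) (PP_inv Hp).
  set y := paut (fun n => p (hr m (p' n))) (fun n => p (hr' m (p' n))).
  have Hy : is_aut y := PP_aut Hyp.
  have SSy : SS E y := SS_paut HE Hyp.
  have SSgp : forall i, SS E (gp y i).
    by elim=> //= i IH; apply: SSm.
  have [d [Hd0 [Hdk Td]]] : exists d, 0 < d /\ d <= k /\ T0 (gp y d).
    apply: NNPP => Hno.
    apply: (@php_aux _ (fun i r => SS E r /\ exists t, T0 t /\ E (gp y i) (aut_mul r t))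
               l (iota 0 k.+1)).
    - exact: iota_uniq.
    - by rewrite size_iota.
    - move=> i _; have [r [t [Hr [Ht He]]]] := Hcov _ (SSgp i).
      by exists r; split=> //; split; [exact: Hl | exists t].
    - have Hr : forall i j r ti tj, j \in iota 0 k.+1 -> SS E r -> T0 ti -> T0 tj ->
          E (gp y i) (aut_mul r ti) -> E (gp y j) (aut_mul r tj) -> i < j -> False.
        move=> i1 j1 r t1 t2 Hj1 Sr T1 T2 E1 E2 Hlt.
        apply: Hno; exists (j1 - i1); split; first by rewrite subn_gt0.
        split; first by move: Hj1; rewrite mem_iota add0n ltnS => H; apply: leq_trans (leq_subr _ _) H.
        have Hra := SSD _ Sr.
        have Ht1 := T0D _ T1; have Ht2 := T0D _ T2.
        apply: (T0e (aut_mul (aut_inv t1) t2)).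
        + by apply: T0m => //; apply: T0i.
        + exact: is_aut_gp.
        + apply: (E_sym HE); autd.
          apply: (coset_diff HE (r := r) (i := i1)); autd.
          by rewrite subnKC // ltnW.
      move=> i j r Hi Hj [Sr [ti [Ti Ei]]] [_ [tj [Tj Ej]]].
      case: (ltngtP i j) => // Hij.
      + by case: (Hr i j r ti tj Hj Sr Ti Tj Ei Ej Hij).
      + by case: (Hr j i r tj ti Hi Sr Tj Ti Ej Ei Hij).
  have Hdm : d %| m by rewrite dvdn_fact // Hd0 Hdk.
  have Tm : T0 (gp y m).
    apply: (T0e (gp (gp y d) (m %/ d))); first exact: T0gp.
      exact: is_aut_gp.
    apply: (E_sym HE); autd.
    by have := @gp_mul E HE y d (m %/ d) Hy; rewrite mulnC divnK.
  apply: (T0e _ _ Tm); first exact: PP_aut (PP_cp Hp).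
  apply: (E_ae HE); [exact: is_aut_gp | exact: PP_aut (PP_cp Hp) |].
  move=> w; apply: weq_trans (paut_gp _ _ _ w) _.
  case: Hp => [H1 [H2 _]].
  apply: paut_ext => n.
  by rewrite iter_conj // hr_iter.
have B : forall n p p', PP p p' -> @derived_iter (mkG E) n T0 (cp p p').
  elim=> [|n IH] p p' Hp; first exact: A.
  have Ha := PP_comp Hp PP_rho1.
  have Hb := PP_comp Hp PP_rho2.
  set a := cp (fun x => p (rho1 x)) (fun x => rho1 (p' x)).
  set b := cp (fun x => p (rho2 x)) (fun x => rho2' (p' x)).
  have Haa : is_aut a := PP_aut (PP_cp Ha).
  have Hba : is_aut b := PP_aut (PP_cp Hb).
  have Hc : is_aut (@comm (mkG E) a b) by rewrite /comm /=; autd.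
  apply: (@gen_eq (mkG E) _ (@comm (mkG E) a b)).
  - apply: gen_base => //; exists a, b; split; first exact: IH.
    by split; first exact: IH.
  - exact: PP_aut (PP_cp Hp).
  - apply: (E_ae HE) => //; first exact: PP_aut (PP_cp Hp).
    case: Hp => [H1 [H2 _]].
    move=> w; rewrite /weq; congr reduce.
    rewrite /= !pm_comp; apply: pm_ext => x.
    by rewrite !H2 -comm_id.
have := Hsol _ (B n0 id id PP_id).
move=> Hc; apply: Hnt.
apply: (E_trans HE (y := cp id id)); [exact: is_aut_gam | exact: PP_aut (PP_cp PP_id) | exact: is_aut_one | | exact: Hc].
by apply: (E_ae HE); [exact: is_aut_gam | exact: PP_aut (PP_cp PP_id) | move=> w].
Qed.

Lemma not_tits E (HE : SGE E) : ~ E (paut gam gam') aut_one -> ~ @tits_alternative (mkG E).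
Proof.
move=> Hnt H.
case: (H _ (SS_subgroup HE)); [exact: not_vs | exact: not_cnf].
Qed.

Theorem mainTheorem6 :
  ~ residually_finite AutFinf /\ ~ residually_finite OutFinf /\
  ~ tits_alternative AutFinf /\ ~ tits_alternative OutFinf.
Proof.
split; first exact: not_rf_aut.
split; first exact: not_rf_out.
split.
  exact: (not_tits SGE_aut gam_nontriv_aut).
exact: (not_tits SGE_out gam_nontriv_out).
Qed.
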